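(* Let $\mathcal{L}$ be the set of loss functions that are both mixable and proper, and let $E$ be the set of tuples $(\gamma^1,\dots,\gamma^N,\eta^1,\dots,\eta^N,\lambda^1,\dots,\lambda^N)\in[0,1]^N\times(0,\infty)^N\times\mathcal{L}^N$ such that $\lambda^n$ is $\eta^n$-mixable for all $n=1,\dots,N$. Fix $n\in\{1,\dots,N\}$ and define $Q^n:(E\times[0,1]\times\{0,1\})^*\to[0,\infty]$ by $$Q^n(e_1,\pi_1,\omega_1,\dots,e_T,\pi_T,\omega_T):=\prod_{t=1}^T\exp\Bigl(\eta_t^n\bigl(\lambda_t^n(\pi_t,\omega_t)-\lambda_t^n(\gamma_t^n,\omega_t)\bigr)\Bigr),$$ where $e_t=(\gamma_t^1,\dots,\gamma_t^N,\eta_t^1,\dots,\eta_t^N,\lambda_t^1,\dots,\lambda_t^N)$ and the empty product equals $1$. Then $Q^n$ is a supermartingale.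
   Context: A loss function is a map $\lambda:[0,1]\times\{0,1\}\to[0,\infty]$ satisfying: (1) $\lambda(\gamma,0)$, $\lambda(\gamma,1)$ continuous in $\gamma\in[0,1]$ (standard topology on $[0,\infty]$); (2) some $\gamma$ has both values finite; (3) no $\gamma$ has both values infinite. Superprediction set: $\Sigma_\lambda=\{(x,y)\in[0,\infty)^2:\exists\gamma\ \lambda(\gamma,0)\le x,\ \lambda(\gamma,1)\le y\}$. $\lambda$ is $\eta$-mixable ($\eta>0$) if $\{(e^{-\eta x},e^{-\eta y}):(x,y)\in\Sigma_\lambda\}$ is convex; mixable if $\eta$-mixable for some $\eta>0$; proper if $\pi\lambda(\pi,1)+(1-\pi)\lambda(\pi,0)\le\pi\lambda(\pi',1)+(1-\pi)\lambda(\pi',0)$ for all $\pi,\pi'\in[0,1]$. A function $S:(E\times[0,1]\times\{0,1\})^*\to(-\infty,\infty]$ is a supermartingale if for any $T$, any $e_1,\dots,e_T\in E$, any $\pi_1,\dots,\pi_T\in[0,1]$ and any $\omega_1,\dots,\omega_{T-1}\in\{0,1\}$: $\pi_T S(e_1,\pi_1,\omega_1,\dots,e_T,\pi_T,1)+(1-\pi_T)S(e_1,\pi_1,\omega_1,\dots,e_T,\pi_T,0)\le S(e_1,\pi_1,\omega_1,\dots,e_{T-1},\pi_{T-1},\omega_{T-1})$. *)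

(* Defs.v *)
From HB Require Import structures.
From mathcomp Require Import all_boot all_order all_algebra.
From mathcomp Require Import all_classical all_reals all_analysis.
Set Implicit Arguments. Unset Strict Implicit. Unset Printing Implicit Defensive.
Import Order.TTheory GRing.Theory Num.Theory.
Import numFieldNormedType.Exports.
Local Open Scope classical_set_scope.
Local Open Scope ring_scope.

(* A prediction-loss pair: lambda g w, with outcome w : bool (true = 1, false = 0). *)
Definition lossfun (R : realType) := R -> bool -> \bar R.

Section Loss.
Variable R : realType.
Implicit Types (lam : lossfun R).

Definition is_loss lam : Prop :=
  (forall g w, g \in `[0, 1] -> (0 <= lam g w)%E) /\
  (forall w, {within `[(0:R), 1], continuous (fun g => lam g w)}) /\
  (exists2 g, g \in `[(0:R), 1] &
     (lam g false \is a fin_num) /\ (lam g true \is a fin_num)) /\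
  (forall g, g \in `[(0:R), 1] -> ~ (lam g false = +oo%E /\ lam g true = +oo%E)).

Definition superpred lam : set (R * R) :=
  [set xy | 0 <= xy.1 /\ 0 <= xy.2 /\
     exists2 g, g \in `[(0:R), 1] &
       (lam g false <= xy.1%:E)%E /\ (lam g true <= xy.2%:E)%E].

Definition mixable_with lam (eta : R) : Prop :=
  0 < eta /\
  @convex_set R (R * R)%type
    ((fun xy : R * R => (expR (- eta * xy.1), expR (- eta * xy.2)))
       @` superpred lam).

Definition mixable lam : Prop := exists eta, mixable_with lam eta.

Definition proper_loss lam : Prop :=
  forall p p', p \in `[(0:R), 1] -> p' \in `[(0:R), 1] ->
    (p%:E * lam p true + (1 - p)%:E * lam p false <=
     p%:E * lam p' true + (1 - p)%:E * lam p' false)%E.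

Definition in_L lam : Prop := is_loss lam /\ mixable lam /\ proper_loss lam.
End Loss.

Definition Etuple (R : realType) (N : nat) :=
  (('I_N -> R) * ('I_N -> R) * ('I_N -> lossfun R))%type.

Definition in_E (R : realType) (N : nat) (e : Etuple R N) : Prop :=
  let: (gam, eta, lam) := e in
  forall i : 'I_N, gam i \in `[(0:R), 1] /\ 0 < eta i /\ in_L (lam i) /\
                   mixable_with (lam i) (eta i).

Definition history (R : realType) (N : nat) := seq (Etuple R N * R * bool)%type.

Definition valid_history (R : realType) (N : nat) (h : history R N) : Prop :=
  forall x, x \in h -> in_E x.1.1 /\ x.1.2 \in `[(0:R), 1].

Definition supermartingale (R : realType) (N : nat) (S : history R N -> \bar R) : Prop :=
  (forall h, valid_history h -> S h != -oo%E) /\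
  forall (h : history R N) (e : Etuple R N) (p : R),
    valid_history h -> in_E e -> p \in `[(0:R), 1] ->
    (p%:E * S (rcons h (e, p, true)) + (1 - p)%:E * S (rcons h (e, p, false))
       <= S h)%E.

Definition Qfactor (R : realType) (N : nat) (n : 'I_N) (x : Etuple R N * R * bool)
  : \bar R :=
  let: (e, p, w) := x in
  let: (gam, eta, lam) := e in
  expeR ((eta n)%:E * (lam n p w - lam n (gam n) w))%E.

Definition Q (R : realType) (N : nat) (n : 'I_N) (h : history R N) : \bar R :=
  (\prod_(x <- h) Qfactor n x)%E.

(* Main.v *)
Require Import Defs.
Set Implicit Arguments. Unset Strict Implicit.
From mathcomp Require Import all_boot all_order all_algebra.
From mathcomp Require Import all_classical all_reals all_analysis.
Import numFieldNormedType.Exports.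
Local Open Scope classical_set_scope.
From mathcomp Require Import ring lra.
Import Order.TTheory GRing.Theory Num.Theory.
Local Open Scope ring_scope.

Lemma half_bound (R : realType) (t a s : R) : 0 < t -> t <= 1/2 -> -1 <= a ->
  (1 - s) * (1 + t * a) <= 1 -> t * a - 2 * (t * t * (a * a)) <= s.
Proof.
move=> t0 t1 a1 h.
have ta : -1/2 <= t * a by nra.
have h2 : t * a <= s * (1 + t * a) by nra.
rewrite leNgt; apply/negP => hs.
have hpos : 0 < 1 + t * a by lra.
have : s * (1 + t*a) < (t * a - 2 * (t * t * (a * a))) * (1 + t * a) by nra.
have : 0 <= (t * a) * (t * a) * (1 + 2 * (t * a)) by apply: mulr_ge0; nra.
nra.
Qed.

Lemma alg_key (R : realType) (p a b s r : R) : 0 < p -> p < 1 -> -1 <= a -> -1 <= b ->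
  0 < p * a + (1 - p) * b ->
  forall t, t = (p * a + (1 - p) * b) / (4 * (a * a + b * b) + 2 * (p * a + (1 - p) * b)) ->
  (1 - s) * (1 + t * a) <= 1 -> (1 - r) * (1 + t * b) <= 1 -> p * s + (1 - p) * r <= 0 -> False.
Proof.
move=> p0 p1 a1 b1 d0 tt -> hs hr hpr.
move: d0 hs hr; set d := p * a + (1 - p) * b => d0; set t := d / _ => hs hr.
set S := a * a + b * b.
have S0 : 0 <= S by rewrite /S; nra.
have den : 0 < 4 * S + 2 * d by lra.
have t0 : 0 < t by rewrite /t divr_gt0.
have td : t * (4 * S + 2 * d) = d by rewrite /t divfK // gt_eqF.
have t1 : t <= 1/2 by nra.
have := half_bound t0 t1 a1 hs.
have := half_bound t0 t1 b1 hr.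
move=> hr' hs'.
have e1 : 0 <= t * t * (a * a) by apply: mulr_ge0; nra.
have e2 : 0 <= t * t * (b * b) by apply: mulr_ge0; nra.
have key : p * s + (1 - p) * r >= t * d - 2 * (t * t * S).
  rewrite /d /S; nra.
have : 0 < t * d - 2 * (t * t * S).
  have -> : t * d - 2 * (t * t * S) = t * (d - 2 * t * S) by ring.
  apply: mulr_gt0 => //. nra.
lra.
Qed.

Lemma t_bounds (R : realType) (p a b : R) : 0 < p * a + (1 - p) * b ->
  let t := (p * a + (1 - p) * b) / (4 * (a * a + b * b) + 2 * (p * a + (1 - p) * b)) in
  0 < t /\ t <= 1.
Proof.
move=> d0 t.
move: d0 @t; set d := p * a + (1 - p) * b => d0.
have S0 : 0 <= a * a + b * b by nra.
have den : 0 < 4 * (a * a + b * b) + 2 * d by lra.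
move=> t.
have t0 : 0 < t by rewrite /t divr_gt0.
have td : t * (4 * (a * a + b * b) + 2 * d) = d by rewrite /t divfK // gt_eqF.
split => //; nra.
Qed.

Lemma exp_h (R : realType) (s : R) : (1 - s) * expR s <= 1.
Proof.
have h := expR_ge1Dx (- s).
have e : expR (- s) * expR s = 1 by rewrite expRN mulVf // gt_eqF // expR_gt0.
rewrite -e ler_pM2r ?expR_gt0 //; lra.
Qed.
Lemma mix_key (R : realType) (lam : lossfun R) (eta p a0 a1 x y : R) :
  0 < p -> p < 1 -> is_loss lam -> proper_loss lam -> mixable_with lam eta ->
  lam p false = a0%:E -> lam p true = a1%:E -> superpred lam (x, y) ->
  p * expR (eta * (a1 - y)) + (1 - p) * expR (eta * (a0 - x)) <= 1.
Proof.
move=> p0 p1 [lge0 _] prop [eta0 cvx] ha0 ha1 Sxy.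
have p01 : p \in `[(0:R), 1] by rewrite in_itv /= ltW // ltW.
rewrite leNgt; apply/negP => hL.
set a := expR (eta * (a1 - y)) - 1.
set b := expR (eta * (a0 - x)) - 1.
have am : -1 <= a by rewrite /a; have := expR_ge0 (eta * (a1 - y)); lra.
have bm : -1 <= b by rewrite /b; have := expR_ge0 (eta * (a0 - x)); lra.
have d0 : 0 < p * a + (1 - p) * b by rewrite /a /b; lra.
have [t0 t1] := t_bounds d0.
set t := _ / _ in t0 t1.
have a0ge : 0 <= a0 by rewrite -lee_fin -ha0; apply: lge0.
have a1ge : 0 <= a1 by rewrite -lee_fin -ha1; apply: lge0.
have UA : (expR (- eta * a0), expR (- eta * a1)) \in
   (fun xy : R * R => (expR (- eta * xy.1), expR (- eta * xy.2))) @` superpred lam.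
  apply/mem_set; exists (a0, a1) => //=; split => //; split => //.
  by exists p => //; rewrite ha0 ha1.
have VA : (expR (- eta * x), expR (- eta * y)) \in
   (fun xy : R * R => (expR (- eta * xy.1), expR (- eta * xy.2))) @` superpred lam.
  by apply/mem_set; exists (x, y).
have := cvx _ _ (Itv01 (ltW t0) t1) VA UA.
move/set_mem => [[x' y'] /= [hx' [hy' [g hg [hg0 hg1]]]] eqW].
case: eqW => ex0 ey0.
simpl in hx', hy', hg0, hg1.
have ex : expR (- eta * x') = t * expR (- eta * x) + (1 - t) * expR (- eta * a0) := ex0.
have ey : expR (- eta * y') = t * expR (- eta * y) + (1 - t) * expR (- eta * a1) := ey0.
have hp := prop p g p01 hg.
rewrite ha0 ha1 in hp.
have hp2 : ((p * a1 + (1 - p) * a0)%:E <= (p * y' + (1 - p) * x')%:E)%E.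
  rewrite !EFinD !EFinM; apply: (le_trans hp); apply: leeD; apply: lee_wpmul2l => //;
  rewrite lee_fin; lra.
rewrite lee_fin in hp2.
set s := eta * (a1 - y').
set r := eta * (a0 - x').
have hpr : p * s + (1 - p) * r <= 0 by rewrite /s /r; nra.
have es : expR s = 1 + t * a.
  rewrite /s (_ : eta * (a1 - y') = eta * a1 + (- eta * y')); last by ring.
  rewrite expRD ey.
  rewrite (_ : forall E A B : R, E * (t * A + (1 - t) * B) = t * (E * A) + (1 - t) * (E * B)); last by move=> *; ring.
  rewrite -!expRD.
  rewrite (_ : eta * a1 + - eta * y = eta * (a1 - y)); last by ring.
  rewrite (_ : eta * a1 + - eta * a1 = 0); last by ring.
  rewrite expR0 /a; ring.
have er : expR r = 1 + t * b.
  rewrite /r (_ : eta * (a0 - x') = eta * a0 + (- eta * x')); last by ring.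
  rewrite expRD ex.
  rewrite (_ : forall E A B : R, E * (t * A + (1 - t) * B) = t * (E * A) + (1 - t) * (E * B)); last by move=> *; ring.
  rewrite -!expRD.
  rewrite (_ : eta * a0 + - eta * x = eta * (a0 - x)); last by ring.
  rewrite (_ : eta * a0 + - eta * a0 = 0); last by ring.
  rewrite expR0 /b; ring.
have hs := exp_h s. rewrite es in hs.
have hr := exp_h r. rewrite er in hr.
exact: (alg_key p0 p1 am bm d0 erefl hs hr hpr).
Qed.
Lemma fin_mid (R : realType) (lam : lossfun R) (h : R) :
  is_loss lam -> proper_loss lam -> 0 < h -> h < 1 ->
  (exists c, lam h false = c%:E) /\ (exists c, lam h true = c%:E).
Proof.
move=> [lge0 [_ [[g0 hg0 [f0 f1]] _]]] prop h0 h1.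
have h01 : h \in `[(0:R), 1] by rewrite in_itv /= ltW // ltW.
have := prop h g0 h01 hg0.
have := lge0 h true h01. have := lge0 h false h01.
have hE : (0 < h%:E)%E by rewrite lte_fin.
have h1E : (0 < (1 - h)%:E)%E by rewrite lte_fin subr_gt0.
move: f0 f1.
case: (lam g0 false) => [d0| |] //; case: (lam g0 true) => [d1| |] // _ _.
case: (lam h false) => [c0| |]; case: (lam h true) => [c1| |] => //=;
  try by (move=> *; split; eexists; reflexivity).
all: move=> _ _; rewrite ?(gt0_muley hE) ?(gt0_muley h1E) -?EFinM ?addye ?addey //
  -?EFinD leye_eq.
Qed.

Lemma cont_ball (R : realType) (f : R -> \bar R) (g b e : R) :
  {within `[(0:R), 1], continuous f} -> g \in `[(0:R), 1] -> f g = b%:E -> 0 < e ->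
  exists2 d, 0 < d & forall h, h \in `[(0:R), 1] -> `|g - h| < d -> (f h < (b + e)%:E)%E.
Proof.
move=> cf g01 fg e0.
have := (subspace_continuousP _ _).1 cf g.
move=> /(_ g01) /(_ [set z | (z < (b + e)%:E)%E]).
have H : nbhs (b%:E) [set z | (z < (b + e)%:E)%E].
  apply/nbhs_EFin; rewrite /=.
  have be : b < b + e by lra.
  by apply: (filterS _ (lt_nbhsl be)) => y /= hy; rewrite lte_fin.
move=> /(_ _) [].
  by rewrite /from_subspace /= fg.
move=> d /= d0 hd; exists d => // h h01 gh.
have := hd h.
by move/(_ gh h01).
Qed.

Lemma cont_part (R : realType) (lam : lossfun R) (eta p a0 a1 g b : R) (w : bool) :
  0 < p -> p < 1 -> is_loss lam -> proper_loss lam -> mixable_with lam eta ->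
  lam p false = a0%:E -> lam p true = a1%:E -> g \in `[(0:R), 1] -> lam g w = b%:E ->
  (if w then p else 1 - p) * expR (eta * ((if w then a1 else a0) - b)) <= 1.
Proof.
move=> p0 p1 hl prop mix ha0 ha1 g01 gb.
set q := (if w then p else 1 - p).
set aw := (if w then a1 else a0).
have q0 : 0 < q by rewrite /q; case: (w); lra.
have eta0 := mix.1.
rewrite leNgt; apply/negP => hK.
move: hK; set K := q * expR (eta * (aw - b)) => hK.
set e := (K - 1) / (2 * K * eta).
have K0 : 0 < K by lra.
have e0 : 0 < e by apply: divr_gt0; [lra| apply: mulr_gt0; [apply: mulr_gt0; lra| lra]].
have ee : K * (eta * e) = (K - 1) / 2 by rewrite /e; field; rewrite ?gt_eqF.
have gen : forall c, c < b + e -> 1 < q * expR (eta * (aw - c)).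
  move=> c hc.
  have h1 : q * expR (eta * (aw - b - e)) < q * expR (eta * (aw - c)).
    by rewrite ltr_pM2l // ltr_expR; nra.
  have h2 : q * expR (eta * (aw - b - e)) = K * expR (- (eta * e)).
    by rewrite /K -mulrA -expRD; congr (_ * expR _); ring.
  have h3 := expR_ge1Dx (- (eta * e)).
  have h4 : K * (1 + - (eta * e)) <= K * expR (- (eta * e)) by rewrite ler_pM2l.
  nra.
have [d d0 hd] := cont_ball (hl.2.1 w) g01 gb e0.
set m := d / (2 * (d + 1)).
have m0 : 0 < m by rewrite /m divr_gt0 // mulr_gt0 //; lra.
have md : m * (2 * (d + 1)) = d by rewrite /m divfK // gt_eqF // mulr_gt0 //; lra.
have m1 : m < d by nra.
have m2 : m < 1 / 2 by nra.
move: g01; rewrite in_itv /= => /andP[g0 g1].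
pose h := if g <= 1 / 2 then g + m else g - m.
have [h0 [h1 hgh]] : 0 < h /\ h < 1 /\ `|g - h| < d.
  rewrite /h; case: ifP => hg.
    rewrite opprD addrA subrr add0r normrN ger0_norm; last exact: ltW.
    split; first lra. split => //; lra.
  move/negbT: hg; rewrite -ltNge => hg.
  rewrite opprB addrCA subrr addr0 ger0_norm; last exact: ltW.
  split; first lra. split => //; lra.
have h01 : h \in `[(0:R), 1] by rewrite in_itv /= ltW // ltW.
have [[c0 hc0] [c1 hc1]] := fin_mid hl prop h0 h1.
have Sc : superpred lam (c0, c1).
  split; first by rewrite -lee_fin -hc0; apply: hl.1.
  split; first by rewrite -lee_fin -hc1; apply: hl.1.
  by exists h => //; rewrite hc0 hc1.
have := mix_key p0 p1 hl prop mix ha0 ha1 Sc.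
have hlt := hd h h01 hgh.
have := expR_ge0 (eta * (a1 - c1)); have := expR_ge0 (eta * (a0 - c0)).
move: gen hlt; rewrite /q /aw; case: (w).
  rewrite hc1 lte_fin => gen /gen H1 E0 E1 Hm.
  have : 0 <= (1 - p) * expR (eta * (a0 - c0)) by apply: mulr_ge0 => //; lra.
  lra.
rewrite hc0 lte_fin => gen /gen H1 E0 E1 Hm.
have : 0 <= p * expR (eta * (a1 - c1)) by apply: mulr_ge0 => //; lra.
lra.
Qed.
Lemma ext_fin (R : realType) (eta : R) (x y z : \bar R) : 0 < eta ->
  (0 <= x)%E -> (0 <= y)%E -> z \is a fin_num -> (x <= y)%E -> (x <= z)%E ->
  (expeR (eta%:E * (x - y)) <= 1)%E.
Proof.
move=> eta0; case: z => [zr| |] // ; case: x => [xr| |] //; case: y => [yr| |] // _ _ _.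
- rewrite !lee_fin => hxy _ /=; rewrite -expR0 ler_expR; nra.
- move=> _ _; rewrite (_ : (xr%:E - +oo = -oo)%E) //.
  by rewrite gt0_muleNy ?lte_fin // /= lee01.
Qed.

Lemma ext_case (R : realType) (lam : lossfun R) (eta g : R) (w : bool) :
  is_loss lam -> proper_loss lam -> 0 < eta -> g \in `[(0:R), 1] ->
  (expeR (eta%:E * (lam (if w then 1%R else 0%R) w - lam g w)) <= 1)%E.
Proof.
move=> [lge0 [_ [[g0 hg0 [f0 f1]] _]]] prop eta0 hg.
have i1 : (1:R) \in `[(0:R), 1] by rewrite in_itv /= ler01 lexx.
have i0 : (0:R) \in `[(0:R), 1] by rewrite in_itv /= ler01 lexx.
case: w => /=.
- have hp := prop 1 g i1 hg. have hp0 := prop 1 g0 i1 hg0.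
  rewrite subrr !mul0e !mul1e !adde0 in hp hp0.
  exact: ext_fin eta0 (lge0 _ _ i1) (lge0 _ _ hg) f1 hp hp0.
- have hp := prop 0 g i0 hg. have hp0 := prop 0 g0 i0 hg0.
  rewrite subr0 !mul0e !mul1e !add0e in hp hp0.
  exact: ext_fin eta0 (lge0 _ _ i0) (lge0 _ _ hg) f0 hp hp0.
Qed.

Lemma factor_le1 (R : realType) (lam : lossfun R) (eta p g : R) :
  is_loss lam -> proper_loss lam -> mixable_with lam eta -> g \in `[(0:R), 1] ->
  p \in `[(0:R), 1] ->
  (p%:E * expeR (eta%:E * (lam p true - lam g true)) +
   (1 - p)%:E * expeR (eta%:E * (lam p false - lam g false)) <= 1)%E.
Proof.
move=> hl prop mix hg hp.
have eta0 := mix.1.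
have [->|pn0] := eqVneq p 0.
  rewrite mul0e add0e subr0 mul1e; exact: (ext_case false hl prop eta0 hg).
have [->|pn1] := eqVneq p 1.
  rewrite subrr mul0e adde0 mul1e; exact: (ext_case true hl prop eta0 hg).
move: (hp); rewrite in_itv /= => /andP[p0 p1].
have {p0}p0 : 0 < p by rewrite lt_neqAle eq_sym pn0.
have {p1}p1 : p < 1 by rewrite lt_neqAle pn1.
have [[a0 ha0] [a1 ha1]] := fin_mid hl prop p0 p1.
rewrite ha0 ha1.
have lg1 := hl.1 g true hg. have lg0 := hl.1 g false hg.
have nboth := hl.2.2.2 g hg.
case E1: (lam g true) lg1 nboth => [b1| |] // lg1;
  case E0: (lam g false) lg0 => [b0| |] // lg0 nboth.
- have Sb : superpred lam (b0, b1).
    split; first by rewrite -lee_fin.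
    split; first by rewrite -lee_fin.
    by exists g => //; rewrite E0 E1.
  have := mix_key p0 p1 hl prop mix ha0 ha1 Sb.
  by rewrite -lee_fin.
- have := cont_part (w:=true) p0 p1 hl prop mix ha0 ha1 hg E1.
  rewrite (_ : (a0%:E - +oo = -oo)%E) // gt0_muleNy ?lte_fin // /= mule0 adde0.
  by rewrite -lee_fin.
- have := cont_part (w:=false) p0 p1 hl prop mix ha0 ha1 hg E0.
  rewrite (_ : (a1%:E - +oo = -oo)%E) // gt0_muleNy ?lte_fin // /= mule0 add0e.
  by rewrite -lee_fin.
- by exfalso; apply: nboth.
Qed.
Lemma Q_ge0 (R : realType) (N : nat) (n : 'I_N) (h : history R N) : (0 <= Q n h)%E.
Proof.
rewrite /Q; apply: (big_ind (fun x => 0 <= x)%E) => //.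
- exact: mule_ge0.
- by move=> [[[[gam eta] lam] p] w] _; exact: expeR_ge0.
Qed.

Unset Implicit Arguments.
Theorem lemma3 (R : realType) (N : nat) (n : 'I_N) :
  supermartingale (Q n : history R N -> \bar R).
Proof.
split.
  move=> h _; have := Q_ge0 n h; case: (Q n h) => //.
move=> h [[gam eta] lam] p _ hE hp.
have [hg [eta0 [[hl [_ prop]] mix]]] := hE n.
have F := factor_le1 hl prop mix hg hp.
rewrite /Q !big_rcons /=.
have c0 := Q_ge0 n h. rewrite /Q in c0.
set c := (\prod_(_ <- h) _)%E in c0 *.
rewrite !(muleCA _ c) -ge0_muleDr; last 2 first.
- apply: mule_ge0; [by rewrite lee_fin; move: hp; rewrite in_itv /= => /andP[]| exact: expeR_ge0].
- apply: mule_ge0; [by rewrite lee_fin subr_ge0; move: hp; rewrite in_itv /= => /andP[]| exact: expeR_ge0].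
by apply: le_trans (lee_wpmul2l c0 F) _; rewrite mule1.
Qed.
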